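(* Let $n=2k$ and let $u_1,\ldots,u_k$ be pairwise distinct elements of $\mathbb{F}_{2^n}$ such that $u_iu_j^{2^k}\in\mathbb{F}_{2^k}^*$ for all $1\le i<j\le k$. Let $t$ be a positive integer, $F_1,\ldots,F_t$ reduced polynomials in $\mathbb{F}_2[X_1,\ldots,X_k]$, $f_i(x)=F_i(\mathrm{Tr}^n_1(u_1x),\ldots,\mathrm{Tr}^n_1(u_kx))$, and $\widehat H(x)=(x^{2^k+1},f_1(x),\ldots,f_t(x))$. Then for $(u,v)\in(\mathbb{F}_{2^k}\times\mathbb{F}_2^t)\setminus\{(0,0)\}$, the component $\langle(u,v),\widehat H(x)\rangle$ is bent if and only if $u\neq0$. In particular, $\widehat H$ has exactly $2^{k+t}-2^t$ bent components (the maximal number of bent components of a $(2k,k+t)$-function), and for every $v\in\mathbb{F}_2^t$ the function $\sum_{i=1}^t v_if_i$ is not bent.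
   Context: $\mathrm{Tr}^n_1(x)=\sum_{i=0}^{n-1}x^{2^i}$; $\langle(u,v),\widehat H(x)\rangle=\mathrm{Tr}^k_1(ux^{2^k+1})+\sum_{i=1}^tv_if_i(x)$. A Boolean function $f$ on $\mathbb{F}_{2^n}$ is bent if $|\sum_x(-1)^{f(x)+\mathrm{Tr}^n_1(ax)}|=2^{n/2}$ for all $a$. A reduced polynomial is a multilinear polynomial over $\mathbb{F}_2$. *)

(* Defs.v *)
From HB Require Import structures.
From mathcomp Require Import all_boot all_order all_algebra all_field.
From mathcomp Require Import mpoly.
Set Implicit Arguments. Unset Strict Implicit. Unset Printing Implicit Defensive.
Import Order.TTheory GRing.Theory Num.Theory.
Local Open Scope ring_scope.

Definition trace (F : finFieldType) (m : nat) (x : F) : F :=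
  \sum_(i < m) x ^+ (2 ^ i).

(* Boolean value of a trace (the trace lies in F_2 = {0,1} when it is
   applied to an element of F_(2^m)). *)
Definition trb (F : finFieldType) (m : nat) (x : F) : bool := trace m x == 1.

Definition in_subfield (F : finFieldType) (k : nat) (x : F) : bool :=
  x ^+ (2 ^ k) == x.

Definition walsh (F : finFieldType) (n : nat) (f : F -> bool) (a : F) : int :=
  \sum_(x : F) (-1) ^+ (f x (+) trb n (a * x)).

Definition bent (F : finFieldType) (n : nat) (f : F -> bool) : bool :=
  [forall a : F, `|walsh n f a| == (2 ^ (n %/ 2))%:Z].

Definition reduced (k : nat) (P : {mpoly 'F_2[k]}) : bool :=
  all (fun m : 'X_{1..k} => [forall j : 'I_k, m j <= 1]%N) (msupp P).

Definition f2b (b : 'F_2) : bool := b == 1.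

Definition fcomp (F : finFieldType) (n k : nat) (u : 'I_k -> F)
  (P : {mpoly 'F_2[k]}) (x : F) : bool :=
  f2b (P.@[fun j : 'I_k => (trb n (u j * x) : nat)%:R]).

(* The component <(u,v), H^(x)> = Tr^k_1(u x^(2^k+1)) + \sum_i v_i f_i(x). *)
Definition component (F : finFieldType) (n k t : nat) (us : 'I_k -> F)
  (Ps : 'I_t -> {mpoly 'F_2[k]}) (u : F) (v : 'I_t -> bool) (x : F) : bool :=
  trb k (u * x ^+ (2 ^ k + 1)) (+)
  \big[addb/false]_(i < t) (v i && fcomp n us (Ps i) x).

Definition vsum (F : finFieldType) (n k t : nat) (us : 'I_k -> F)
  (Ps : 'I_t -> {mpoly 'F_2[k]}) (v : 'I_t -> bool) (x : F) : bool :=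
  \big[addb/false]_(i < t) (v i && fcomp n us (Ps i) x).

(* Main.v *)
Require Import Defs.
From HB Require Import structures.
From mathcomp Require Import all_boot all_order all_algebra all_field.
From mathcomp Require Import mpoly.
From mathcomp Require Import ring.
Import GRing.Theory.
Set Implicit Arguments. Unset Strict Implicit. Unset Printing Implicit Defensive.
Local Open Scope ring_scope.

Section Basics.
Variable F : finFieldType.
Hypothesis two0 : (1 + 1 : F) = 0.

Lemma addxx (x : F) : x + x = 0.
Proof. by rewrite -[x]mulr1 -mulrDr two0 mulr0. Qed.

Lemma frobD i (x y : F) : (x + y) ^+ (2 ^ i) = x ^+ (2 ^ i) + y ^+ (2 ^ i).
Proof.
elim: i => [|i IH]; first by rewrite !expr1.
rewrite expnS mulnC !exprM IH sqrrD.
by rewrite mulr2n addxx addr0.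
Qed.

Lemma frob_sum i (r : seq nat) (G : nat -> F) :
  (\sum_(j <- r) G j) ^+ (2 ^ i) = \sum_(j <- r) G j ^+ (2 ^ i).
Proof.
elim: r => [|a r IH]; first by rewrite !big_nil expr0n expn_eq0.
by rewrite !big_cons frobD IH.
Qed.

Lemma traceD m (x y : F) : trace m (x + y) = trace m x + trace m y.
Proof. by rewrite /trace -big_split /=; apply: eq_bigr => j _; rewrite frobD. Qed.

Lemma trace0 m : trace m (0 : F) = 0.
Proof. by rewrite /trace big1 // => j _; rewrite expr0n expn_eq0. Qed.

Lemma trace_frob m i (x : F) : trace m x ^+ (2 ^ i) = trace m (x ^+ (2 ^ i)).
Proof.
rewrite /trace -(big_map (@nat_of_ord m) xpredT (fun j => x ^+ (2 ^ j))).
rewrite frob_sum big_map; apply: eq_bigr => j _.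
by rewrite -!exprM mulnC.
Qed.

Lemma trace_sq m (x : F) : x ^+ (2 ^ m) = x -> trace m x ^+ 2 = trace m x.
Proof.
move=> hx; rewrite -(expn1 2) trace_frob expn1 /trace.
case: m hx => [|m] hx; first by rewrite !big_ord0.
rewrite big_ord_recr big_ord_recl /= -{3}hx addrC; congr (_ + _).
  by rewrite expn0 expr1 -exprM -expnS.
by apply: eq_bigr => j _; rewrite -exprM -expnS.
Qed.

Lemma sq_id (a : F) : a ^+ 2 = a -> a = 0 \/ a = 1.
Proof.
move=> h; have : a * (a - 1) = 0 by rewrite mulrBr mulr1 -expr2 h subrr.
by move/eqP; rewrite mulf_eq0 subr_eq0 => /orP[] /eqP; [left|right].
Qed.

Lemma one_neq0 : (1 : F) != 0. Proof. exact: oner_neq0. Qed.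

Lemma trbD m (x y : F) : trace m x ^+ 2 = trace m x -> trace m y ^+ 2 = trace m y ->
  trb m (x + y) = trb m x (+) trb m y.
Proof.
rewrite /trb traceD => /sq_id hx /sq_id hy.
have h10 : ((1 : F) == 0) = false by apply/negbTE/oner_neq0.
have h01 : ((0 : F) == 1) = false by rewrite eq_sym h10.
case: hx => ->; case: hy => ->;
  by rewrite ?addr0 ?add0r ?two0 ?eqxx ?h01.
Qed.

Lemma trace_split k (y : F) : trace (k + k) y = trace k y + trace k (y ^+ (2 ^ k)).
Proof.
rewrite /trace big_split_ord /=; congr (_ + _).
by apply: eq_bigr => i _; rewrite -exprM -expnD.
Qed.

Lemma trace_sub k (y : F) : y ^+ (2 ^ k) = y -> trace (k + k) y = 0.
Proof. by move=> h; rewrite trace_split h addxx. Qed.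

Lemma card_roots (p : {poly F}) : p != 0 -> (#|[pred x | root p x]| < size p)%N.
Proof.
move=> p0; rewrite cardE; apply: max_poly_roots => //; last exact: enum_uniq.
by apply/allP => x; rewrite mem_enum.
Qed.

End Basics.

Section Field.
Variable F : finFieldType.
Variable k : nat.
Hypothesis two0 : (1 + 1 : F) = 0.
Hypothesis cardF : #|F| = (2 ^ (k + k))%N.
Hypothesis k0 : (0 < k)%N.

Lemma fermat (x : F) : x ^+ (2 ^ (k + k)) = x.
Proof. by rewrite -cardF expf_card. Qed.

Lemma trn_sq (x : F) : trace (k + k) x ^+ 2 = trace (k + k) x.
Proof. exact: trace_sq (fermat x). Qed.

Lemma tr01 (x : F) : trace (k + k) x = 0 \/ trace (k + k) x = 1.
Proof. exact: sq_id (trn_sq x). Qed.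

Lemma exists_tr1 : exists y : F, trace (k + k) y = 1.
Proof.
pose n := (k + k)%N.
have n0 : (0 < n)%N by rewrite addn_gt0 k0.
pose tp : {poly F} := \sum_(i < n) 'X^(2 ^ i).
have htp x : tp.[x] = trace n x.
  by rewrite /tp horner_sum; apply: eq_bigr => i _; rewrite hornerXn.
have tp0 : tp != 0.
  apply/eqP => /(congr1 (fun q : {poly F} => q`_1)).
  rewrite coef0 /tp coef_sum.
  rewrite (bigD1 (Ordinal n0)) //= coefXn expn0 eqxx big1 ?addr0.
    exact/eqP/oner_neq0.
  move=> [[|j] ji] hi; first by exfalso; move/eqP: hi; apply; apply/val_inj.
  rewrite coefXn /= expnS; have := expn_gt0 2 j.
  by case: (2 ^ j)%N => [|m] //= _; rewrite mul2n doubleS.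
have stp : (size tp <= (2 ^ n.-1).+1)%N.
  apply: leq_trans (size_sum _ _ _) _.
  apply/bigmax_leqP => i _; rewrite size_polyXn ltnS leq_pexp2l //.
  by rewrite -ltnS prednK.
case: (pickP (fun y : F => trace n y == 1)) => [y /eqP hy | hall]; first by exists y.
exfalso.
have := card_roots tp0.
have -> : #|[pred x | root tp x]| = #|F|.
  apply: eq_card => x; rewrite !inE /root htp.
  by case: (tr01 x) => hx; rewrite -/n hx ?eqxx // ; move: (hall x); rewrite /= hx eqxx.
move=> h; have := leq_trans h stp.
rewrite cardF -/n ltnS leqNgt => /negP; apply.
by rewrite ltn_exp2l // ltn_predL.
Qed.
Lemma oppF (b : F) : - b = b.
Proof. by rewrite -[LHS]add0r -(addxx two0 b) addrK. Qed.

Lemma addeq0 (a b : F) : (a + b == 0) = (a == b).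
Proof. by rewrite -{1}(oppF b) subr_eq0. Qed.

Lemma fiber_card (y : F) : (#|[pred x : F | (x ^+ (2 ^ k) + x == y)%R]| <= 2 ^ k)%N.
Proof.
pose q : {poly F} := 'X^(2 ^ k) + ('X - y%:P).
have sq : size q = (2 ^ k).+1.
  rewrite /q size_polyDl size_polyXn // size_XsubC ltnS.
  by have := leq_pexp2l (isT : (0 < 2)%N) k0; rewrite expn1.
have q0 : q != 0 by rewrite -size_poly_eq0 sq.
have := card_roots q0; rewrite sq ltnS; apply: leq_trans; apply: subset_leq_card.
apply/subsetP => x; rewrite !inE /root /q !hornerE.
change (x ^+ (2 ^ k) + x == y -> x ^+ (2 ^ k) + x - y == 0).
by move=> /eqP ->; rewrite subrr.
Qed.

Lemma card_sub : #|[pred x : F | in_subfield k x]| = (2 ^ k)%N.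
Proof.
apply/eqP; rewrite eqn_leq; apply/andP; split.
  apply: leq_trans (fiber_card 0); apply: subset_leq_card.
  by apply/subsetP => x; rewrite !inE /in_subfield addeq0.
pose phi (x : F) := x ^+ (2 ^ k) + x.
have phiS x : in_subfield k (phi x).
  rewrite /in_subfield /phi frobD // -exprM -expnD fermat addrC.
  by [].
have : (2 ^ k * 2 ^ k <= #|[pred x : F | in_subfield k x]| * 2 ^ k)%N.
  rewrite -expnD -cardF -sum1_card -sum_nat_const.
  rewrite (partition_big phi [pred x : F | in_subfield k x]) /=; last by move=> x _; exact: phiS.
  apply: leq_sum => y _.
  apply: leq_trans (fiber_card y); rewrite -sum1_card.
  by apply: eq_leq; apply: eq_bigl => x.
by rewrite leq_pmul2r // expn_gt0.
Qed.

End Field.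

Section Walsh.
Variable F : finFieldType.
Variable k : nat.
Hypothesis two0 : (1 + 1 : F) = 0.
Hypothesis cardF : #|F| = (2 ^ (k + k))%N.
Hypothesis k0 : (0 < k)%N.
Import Num.Theory.

Lemma trbn_add (a x z : F) :
  trb (k + k) (a * (x + z)) = trb (k + k) (a * x) (+) trb (k + k) (a * z).
Proof. by rewrite mulrDr trbD // trn_sq. Qed.

Lemma sum_shift (G : F -> int) (w : F) : \sum_(x : F) G (x + w) = \sum_(x : F) G x.
Proof. by rewrite [RHS](reindex_inj (addIr w)). Qed.

Lemma sgn_id (f : F -> bool) (a x z : F) :
  (-1) ^+ (f x (+) trb (k + k) (a * x)) * (-1) ^+ (f (z + x) (+) trb (k + k) (a * (z + x)))
  = (-1) ^+ trb (k + k) (a * z) * (-1) ^+ (f (x + z) (+) f x) :> int.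
Proof.
rewrite -!signr_addb trbn_add (addrC x z); congr (_ ^+ _).
by case: (f x); case: (f (z + x)); case: trb; case: trb.
Qed.

Lemma bent_of_deriv (f : F -> bool) :
  (forall z, z != 0 -> \sum_(x : F) (-1) ^+ (f (x + z) (+) f x) = 0 :> int) ->
  bent (k + k) f.
Proof.
move=> hd; apply/forallP => a.
set W := walsh _ f a.
have hW : W * W = (2 ^ (k + k))%N%:Z.
  rewrite /W /walsh mulr_suml.
  under eq_bigr => x _ do rewrite mulr_sumr -(sum_shift _ x).
  rewrite exchange_big /=.
  under eq_bigr => z _ do (under eq_bigr => x _ do rewrite sgn_id; rewrite -mulr_sumr).
  rewrite (bigD1 0) //= [X in _ + X]big1 ?addr0; last by move=> z hz; rewrite hd // mulr0.
  rewrite mulr0 /trb trace0 eq_sym (negbTE (oner_neq0 F)) expr0 mul1r.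
  under eq_bigr => x _ do rewrite addr0 addbb expr0.
  by rewrite sumr_const cardF natz.
rewrite addnn -mul2n mulKn // -(eqrXn2 (isT : (0 < 2)%N)) ?normr_ge0 //.
rewrite real_normK ?num_real // expr2 hW.
by rewrite expr2 -PoszM -expnD.
Qed.
Lemma sum_flip (G : F -> bool) (w : F) :
  (forall x, G (x + w) = ~~ G x) -> \sum_(x : F) (-1) ^+ G x = 0 :> int.
Proof.
move=> hG; set S := (X in X = _).
have hS : S = - S.
  rewrite {1}/S -(sum_shift _ w) /S -sumrN; apply: eq_bigr => x _.
  by rewrite hG; case: (G x); rewrite /= ?expr0 ?expr1 ?opprK.
have : S *+ 2 == 0 by rewrite mulr2n {1}hS addNr.
by rewrite mulrn_eq0 /= => /eqP.
Qed.

Lemma deriv_zero (f : F -> bool) (z : F) :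
  (exists w, forall x, f (x + w + z) (+) f (x + w) = ~~ (f (x + z) (+) f x)) ->
  \sum_(x : F) (-1) ^+ (f (x + z) (+) f x) = 0 :> int.
Proof. by case=> w hw; apply: (sum_flip (w := w)) => x; rewrite -hw. Qed.

Lemma not_bent (f : F -> bool) (w : F) :
  w != 0 -> (forall x, f (x + w) = f x) -> ~~ bent (k + k) f.
Proof.
move=> w0 hw; have [y0 hy0] := exists_tr1 two0 cardF k0.
apply/negP => /forallP /(_ (y0 / w)).
rewrite /walsh (sum_flip (w := w)); last first.
  move=> x; rewrite hw trbn_add.
  have -> : trb (k + k) (y0 / w * w) = true by rewrite divfK // /trb hy0 eqxx.
  by rewrite addbT addbN.
rewrite normr0 => /eqP [] h; move: (expn_gt0 2 ((k + k) %/ 2)); by rewrite -h.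
Qed.

End Walsh.

Section Main.
Variable F : finFieldType.
Variables k t : nat.
Variable us : 'I_k -> F.
Variable Ps : 'I_t -> {mpoly 'F_2[k]}.
Hypothesis two0 : (1 + 1 : F) = 0.
Hypothesis cardF : #|F| = (2 ^ (k + k))%N.
Hypothesis k0 : (0 < k)%N.
Hypothesis hus : forall i j : 'I_k, (i < j)%N ->
     in_subfield k (us i * us j ^+ (2 ^ k)) /\ us i * us j ^+ (2 ^ k) != 0.

Let n := (k + k)%N.

Lemma frob2 (x : F) : x ^+ (2 ^ k) ^+ (2 ^ k) = x.
Proof. by rewrite -exprM -expnD fermat. Qed.

Lemma subP (x : F) : in_subfield k x -> x ^+ (2 ^ k) = x.
Proof. by move/eqP. Qed.

Lemma sub_mul (a b : F) : in_subfield k a -> in_subfield k b -> in_subfield k (a * b).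
Proof. by move=> /subP ha /subP hb; rewrite /in_subfield exprMn ha hb. Qed.

Lemma sub_inv (a : F) : in_subfield k a -> in_subfield k a^-1.
Proof. by move=> /subP ha; rewrite /in_subfield exprVn ha. Qed.

Lemma sub_add (a b : F) : in_subfield k a -> in_subfield k b -> in_subfield k (a + b).
Proof. by move=> /subP ha /subP hb; rewrite /in_subfield frobD // ha hb. Qed.

Lemma sub_frob (a : F) : in_subfield k (a + a ^+ (2 ^ k)).
Proof. by rewrite /in_subfield frobD // frob2 addrC. Qed.

Lemma sub_norm (x : F) : in_subfield k (x ^+ (2 ^ k + 1)).
Proof.
by rewrite /in_subfield exprD expr1 exprMn frob2 mulrC.
Qed.

Lemma pair_sub (i j : 'I_k) : in_subfield k (us j * us i ^+ (2 ^ k)).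
Proof.
case: (ltngtP i j) => hij.
- have [h _] := hus hij.
  have -> : us j * us i ^+ (2 ^ k) = (us i * us j ^+ (2 ^ k)) ^+ (2 ^ k).
    by rewrite exprMn frob2 mulrC.
  by rewrite (subP h).
- by have [h _] := hus hij.
- have -> : i = j by apply: val_inj.
  by rewrite mulrC -exprSr -addn1 sub_norm.
Qed.

Lemma trace_frobk (y : F) : trace n (y ^+ (2 ^ k)) = trace n y.
Proof.
rewrite -trace_frob //; case: (tr01 two0 cardF y) => ->.
  by rewrite expr0n expn_eq0.
by rewrite expr1n.
Qed.

Lemma dual_in_K (u : F) (i : 'I_k) : in_subfield k u -> u != 0 ->
  forall j, trace n (us j * (us i / u) ^+ (2 ^ k)) = 0.
Proof.
move=> hu u0 j.
rewrite exprMn exprVn (subP hu) mulrA.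
by apply: trace_sub => //; apply/subP/sub_mul; [exact: pair_sub | exact: sub_inv].
Qed.

Lemma fcomp_inv (w : F) (P : {mpoly 'F_2[k]}) :
  (forall j, trace n (us j * w) = 0) -> forall x, fcomp n us P (x + w) = fcomp n us P x.
Proof.
move=> hw x; rewrite /fcomp !mevalE; congr f2b; apply: eq_bigr => m _.
congr (_ * _); apply: eq_bigr => j _.
by rewrite /trb mulrDr (traceD two0) hw addr0.
Qed.

Lemma vsum_inv (w : F) v :
  (forall j, trace n (us j * w) = 0) -> forall x, vsum n us Ps v (x + w) = vsum n us Ps v x.
Proof.
move=> hw x; rewrite /vsum; apply: eq_bigr => i _.
by rewrite fcomp_inv.
Qed.

Lemma trk_sq (a : F) : in_subfield k a -> trace k a ^+ 2 = trace k a.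
Proof. by move=> h; apply: trace_sq two0 _ _ (subP h). Qed.

Lemma Qderiv (u x z : F) : in_subfield k u ->
  trb k (u * (x + z) ^+ (2 ^ k + 1)) =
  trb n (u * z ^+ (2 ^ k) * x) (+) trb k (u * z ^+ (2 ^ k + 1)) (+) trb k (u * x ^+ (2 ^ k + 1)).
Proof.
move=> hu; set y := u * z ^+ (2 ^ k) * x.
have hy : y ^+ (2 ^ k) = u * z * x ^+ (2 ^ k) by rewrite /y !exprMn frob2 (subP hu).
have e : u * (x + z) ^+ (2 ^ k + 1) =
    (u * x ^+ (2 ^ k + 1) + u * z ^+ (2 ^ k + 1)) + (y + y ^+ (2 ^ k)).
  rewrite hy /y !exprD !expr1 frobD //.
  set X := x ^+ (2 ^ k); set Z := z ^+ (2 ^ k).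
  ring.
have hA : in_subfield k (u * x ^+ (2 ^ k + 1)) by apply: sub_mul => //; exact: sub_norm.
have hC : in_subfield k (u * z ^+ (2 ^ k + 1)) by apply: sub_mul => //; exact: sub_norm.
rewrite e.
transitivity (trb k (u * x ^+ (2 ^ k + 1) + u * z ^+ (2 ^ k + 1)) (+) trb k (y + y ^+ (2 ^ k))).
  by apply: (trbD two0); apply: trk_sq; [apply: sub_add | apply: sub_frob].
have -> : trb k (u * x ^+ (2 ^ k + 1) + u * z ^+ (2 ^ k + 1)) =
    trb k (u * x ^+ (2 ^ k + 1)) (+) trb k (u * z ^+ (2 ^ k + 1)).
  by apply: (trbD two0); apply: trk_sq.
have -> : trb k (y + y ^+ (2 ^ k)) = trb n y by rewrite /trb (traceD two0) /n trace_split.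
by case: (trb n y); case: trb; case: trb.
Qed.

Lemma compE u v x :
  component n us Ps u v x = trb k (u * x ^+ (2 ^ k + 1)) (+) vsum n us Ps v x.
Proof. by []. Qed.

Lemma boolD (a b c d e : bool) :
  ((a (+) b (+) c) (+) d) (+) (c (+) e) = a (+) b (+) (d (+) e).
Proof. by case: a; case: b; case: c; case: d; case: e. Qed.

Lemma tr_cases (z : F) :
  (forall j, trace n (us j * z) = 0) \/ exists j, trace n (us j * z) = 1.
Proof.
case: (pickP (fun j => trace n (us j * z) == 1)) => [j /eqP hj | hn].
  by right; exists j.
left => j; case: (tr01 two0 cardF (us j * z)) => // h.
by move: (hn j); rewrite /= h eqxx.
Qed.

Lemma comp_bent u v : in_subfield k u -> u != 0 -> bent n (component n us Ps u v).
Proof.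
move=> hu u0; apply: (bent_of_deriv two0 cardF) => z z0.
apply: deriv_zero.
set f := component n us Ps u v; set g := vsum n us Ps v.
set c := u * z ^+ (2 ^ k).
have hD x : f (x + z) (+) f x =
    trb n (c * x) (+) trb k (u * z ^+ (2 ^ k + 1)) (+) (g (x + z) (+) g x).
  by rewrite /f !compE Qderiv // boolD.
have c0 : c != 0 by rewrite mulf_neq0 // expf_neq0.
case: (tr_cases z) => [hA | [j hj]].
  have [y0 hy0] := exists_tr1 two0 cardF k0.
  exists (y0 / c) => x; rewrite !hD /g !(vsum_inv _ hA).
  rewrite (trbn_add two0 cardF) (mulrC c (y0 / c)) divfK // {2}/trb hy0 eqxx.
  by rewrite !addbb; case: (trb n (c * x)); case: (trb k (u * _)).
have K := dual_in_K j hu u0.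
exists ((us j / u) ^+ (2 ^ k)) => x; rewrite !hD /g -(addrAC x z) !(vsum_inv _ K).
rewrite (trbn_add two0 cardF).
have -> : c * (us j / u) ^+ (2 ^ k) = (us j * z) ^+ (2 ^ k).
  rewrite /c exprMn exprVn (subP hu) [RHS]exprMn.
  set Z := z ^+ (2 ^ k); set U := us j ^+ (2 ^ k).
  by field.
rewrite {2}/trb trace_frobk hj eqxx.
by case: (trb n (c * x)); case: (trb k (u * _)); case: vsum; case: vsum.
Qed.

Lemma sub1 : in_subfield k (1 : F).
Proof. by rewrite /in_subfield expr1n. Qed.

Lemma vsum_nonbent v : ~~ bent n (vsum n us Ps v).
Proof.
have [w [w0 hw]] : exists w : F, w != 0 /\ forall j, trace n (us j * w) = 0.
  case: (pickP (fun j => us j != 0)) => [j hj | hn].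
    exists ((us j / 1) ^+ (2 ^ k)); split; first by rewrite expf_neq0 // divr1.
    exact: (dual_in_K j sub1 (oner_neq0 F)).
  exists 1; split; first exact: oner_neq0.
  by move=> j; move: (hn j) => /= /negbFE /eqP ->; rewrite mul0r trace0.
apply: (not_bent two0 cardF k0 w0).
exact: vsum_inv.
Qed.

Lemma bent_ext m (f g : F -> bool) : f =1 g -> bent m f = bent m g.
Proof.
move=> h; rewrite /bent /walsh; apply: eq_forallb => a.
by under eq_bigr => x _ do rewrite h.
Qed.

Lemma comp0 v : component n us Ps 0 v =1 vsum n us Ps v.
Proof.
move=> x; rewrite compE mul0r /trb trace0 eq_sym.
by rewrite (negbTE (oner_neq0 F)).
Qed.

End Main.

Theorem corollary6 (F : finFieldType) (n k t : nat) (us : 'I_k -> F)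
  (Ps : 'I_t -> {mpoly 'F_2[k]}) :
  n = (2 * k)%N ->
  #|F| = (2 ^ n)%N ->
  injective us ->
  (forall i j : 'I_k, (i < j)%N ->
     in_subfield k (us i * us j ^+ (2 ^ k)) /\ us i * us j ^+ (2 ^ k) != 0) ->
  (0 < t)%N ->
  (forall i, reduced (Ps i)) ->
  (forall (u : F) (v : 'I_t -> bool), in_subfield k u ->
     (u != 0 \/ exists i, v i) ->
     (bent n (component n us Ps u v) <-> u != 0))
  /\ #|[set p : F * {ffun 'I_t -> bool} |
         in_subfield k p.1 && bent n (component n us Ps p.1 p.2)]|
     = (2 ^ (k + t) - 2 ^ t)%N
  /\ (forall v : 'I_t -> bool, ~~ bent n (vsum n us Ps v)).
Proof.
move=> hn hcard _ hus _ _.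
have e2 : (2 * k = k + k)%N by rewrite mul2n addnn.
have cardF : #|F| = (2 ^ (k + k))%N by rewrite hcard hn e2.
have k0 : (0 < k)%N.
  case: k {us Ps hus hn e2 hcard} cardF => // cardF.
  have : (1 < #|F|)%N.
    by apply/card_gt1P; exists 0, 1; split => //; rewrite eq_sym oner_neq0.
  by rewrite cardF.
have two0 : (1 + 1 : F) = 0.
  have hc : (2 \in [char F])%R by apply: (card_finPcharP hcard).
  by rewrite -mulr2n (pcharf0 hc).
rewrite hn e2.
have nb v := vsum_nonbent Ps two0 cardF k0 hus v.
have c0 v : bent (k + k) (component (k + k) us Ps 0 v) = false.
  by rewrite (bent_ext _ (comp0 us Ps v)); apply/negbTE.
split; last split.
- move=> u v hu _; case: (eqVneq u 0) => [-> | u0].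
    by rewrite c0; split => // /negP [].
  by split=> // _; apply: (comp_bent Ps two0 cardF k0 hus).
- have -> : [set p : F * {ffun 'I_t -> bool} |
         in_subfield k p.1 && bent (k + k) (component (k + k) us Ps p.1 p.2)] =
      setX [set u : F | in_subfield k u && (u != 0)] [set: {ffun 'I_t -> bool}].
    apply/setP => -[u v]; rewrite !inE /= andbT.
    case hu: (in_subfield k u) => //=.
    case: (eqVneq u 0) => [-> | u0] /=; first by rewrite c0.
    by apply: (comp_bent Ps two0 cardF k0 hus).
  rewrite cardsX cardsT card_ffun card_bool card_ord.
  have hS := card_sub two0 cardF k0.
  rewrite (cardD1 0) inE /in_subfield expr0n expn_eq0 /= eqxx /= in hS.
  have -> : #|[set u : F | in_subfield k u && (u != 0)]| = (2 ^ k - 1)%N.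
    rewrite cardsE -hS add1n subn1 /=; apply: eq_card => x.
    by rewrite !inE andbC.
  by rewrite mulnBl mul1n expnD.
- exact: nb.
Qed.
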